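(* Let $u_1>0$, $u_2>0$ with $U:=u_1+u_2<1$, let $0<q<1$, and let $n\in\mathbf N$. Let $(\Omega_n,p)$ be the probability space described in the context, and for $i_0,i_1,i_2\in\mathbf N_0$ with $i_0+i_1+i_2=n$ let $A(n;i_0,i_1,i_2)\subset\Omega_n$ be the set of sequences in which the symbols $0,1,2$ occur exactly $i_0,i_1,i_2$ times respectively. Then $$P\big(A(n;i_0,i_1,i_2)\big)=\sum_{\omega\in A(n;i_0,i_1,i_2)}p(\omega)=u_1^{i_1}u_2^{i_2}(U;q)_{i_0}\begin{bmatrix}n\\ i_0,i_1,i_2\end{bmatrix}_q .$$
   Context: For $j\in\mathbf N$, $(x;q)_j=(1-x)(1-qx)\cdots(1-q^{j-1}x)$, $(x;q)_0=1$, $(q)_j=(q;q)_j$, and for $i_0+i_1+i_2=n$ the $q$-polynomial coefficient is $\begin{bmatrix}n\\ i_0,i_1,i_2\end{bmatrix}_q=\frac{(q)_n}{(q)_{i_0}(q)_{i_1}(q)_{i_2}}$. The sample space $\Omega_n$ consists of all sequences $(\varepsilon_1,\dots,\varepsilon_n)$ with $\varepsilon_j\in\{0,1,2,\ast\}$ such that if $\varepsilon_k=\ast$ then $\varepsilon_l=\ast$ for all $l>k$. Put $p((\varepsilon_1,\dots,\varepsilon_n))=f_1\cdots f_n$ where $f_1=1-U,u_1,u_2,0$ according as $\varepsilon_1=0,1,2,\ast$; for $1\le m\le n-1$, if $\varepsilon_m=\ast$ then $f_{m+1}=1$, and if $\varepsilon_1,\dots,\varepsilon_m\in\{0,1,2\}$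 contain $i_0$ zeros, $i_1$ ones and $i_2$ twos, then $f_{m+1}=1-q^{i_0}U$, $q^{i_0}u_1$, $q^{i_0+i_1}u_2$, $q^{i_0}u_2(1-q^{i_1})$ according as $\varepsilon_{m+1}=0,1,2,\ast$. *)

(* Defs.v *)
From HB Require Import structures.
From mathcomp Require Import all_boot all_order all_algebra.
Set Implicit Arguments. Unset Strict Implicit. Unset Printing Implicit Defensive.
Import Order.TTheory GRing.Theory Num.Theory.
Local Open Scope ring_scope.

Inductive sym := S0 | S1 | S2 | Sstar.

Definition sym_to (s : sym) : 'I_4 :=
  match s with S0 => inord 0 | S1 => inord 1 | S2 => inord 2 | Sstar => inord 3 end.
Definition sym_of (i : 'I_4) : option sym :=
  match val i with 0%N => Some S0 | 1%N => Some S1 | 2%N => Some S2 | _ => Some Sstar end.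
Lemma sym_toK : pcancel sym_to sym_of.
Proof. by case; rewrite /sym_of /= inordK. Qed.
HB.instance Definition _ := Finite.copy sym (pcan_type sym_toK).

Definition qpoch {R : comRingType} (x q : R) (j : nat) : R :=
  \prod_(k < j) (1 - q ^+ k * x).

Definition qmultinom {R : fieldType} (q : R) (n i0 i1 i2 : nat) : R :=
  qpoch q q n / (qpoch q q i0 * qpoch q q i1 * qpoch q q i2).

Definition inOmega (n : nat) (w : n.-tuple sym) : bool :=
  [forall k : 'I_n, forall l : 'I_n,
     ((tnth w k == Sstar) && (k < l)%N) ==> (tnth w l == Sstar)].

(* factor f_{m+1} given the prefix (eps_1,...,eps_m) and eps_{m+1} = e *)
Definition fstep {R : ringType} (u1 u2 q : R) (prefix : seq sym) (e : sym) : R :=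
  if (prefix != [::]) && (last S0 prefix == Sstar) then 1 else
  let i0 := count (pred1 S0) prefix in
  let i1 := count (pred1 S1) prefix in
  match e with
  | S0 => 1 - q ^+ i0 * (u1 + u2)
  | S1 => q ^+ i0 * u1
  | S2 => q ^+ (i0 + i1) * u2
  | Sstar => q ^+ i0 * u2 * (1 - q ^+ i1)
  end.

Definition pw {R : ringType} (u1 u2 q : R) (n : nat) (w : n.-tuple sym) : R :=
  \prod_(m < n) fstep u1 u2 q (take m w) (tnth w m).

Definition inA (n i0 i1 i2 : nat) (w : n.-tuple sym) : bool :=
  [&& inOmega w, count (pred1 S0) w == i0, count (pred1 S1) w == i1
    & count (pred1 S2) w == i2].

(* Main.v *)
Require Import Defs.
From mathcomp Require Import all_boot all_order all_algebra.
From mathcomp Require Import ring zify.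
Import Order.TTheory GRing.Theory Num.Theory.
Set Implicit Arguments. Unset Strict Implicit. Unset Printing Implicit Defensive.
Local Open Scope ring_scope.

Definition seqb (x y : sym) : bool := match x, y with
 | S0, S0 | S1, S1 | S2, S2 | Sstar, Sstar => true | _, _ => false end.
Lemma symE x y : (x == y) = seqb x y.
Proof. by case: x; case: y; rewrite /= ?eqxx //; apply/negbTE/eqP. Qed.

Lemma n0 : (S0 != Sstar) = true. Proof. by rewrite symE. Qed.
Lemma n1 : (S1 != Sstar) = true. Proof. by rewrite symE. Qed.
Lemma n2 : (S2 != Sstar) = true. Proof. by rewrite symE. Qed.

Definition rcons_tuple n (t : n.-tuple sym) (x : sym) : n.+1.-tuple sym :=
  @Tuple n.+1 _ (rcons t x) (introT eqP (etrans (size_rcons t x) (f_equal S (size_tuple t)))).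

Lemma take_tupleP n (w : n.+1.-tuple sym) : size (take n w) == n.
Proof. by rewrite size_take size_tuple ltnSn. Qed.

Definition unr n (w : n.+1.-tuple sym) : n.-tuple sym * sym :=
  (Tuple (take_tupleP w), tnth w ord_max).

Lemma take_rcons_t n (t : n.-tuple sym) x : take n (rcons t x) = t.
Proof. by rewrite -cats1 takel_cat ?size_tuple // take_oversize ?size_tuple. Qed.

Definition Pn (w : seq sym) (i0 i1 i2 : nat) : bool :=
  all (fun e => e != Sstar) w &&
  [&& count (pred1 S0) w == i0, count (pred1 S1) w == i1 & count (pred1 S2) w == i2].

Lemma count_rcons (a : pred sym) s x : count a (rcons s x) = (count a s + a x)%N.
Proof. by rewrite -cats1 count_cat /= addn0. Qed.

Section Main.
Variables (R : realFieldType) (u1 u2 q : R).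

Definition fs (c0 c1 : nat) (e : sym) : R :=
  match e with
  | S0 => 1 - q ^+ c0 * (u1 + u2)
  | S1 => q ^+ c0 * u1
  | S2 => q ^+ (c0 + c1) * u2
  | Sstar => q ^+ c0 * u2 * (1 - q ^+ c1)
  end.

Lemma fstep_ns (t : seq sym) e : all (fun e => e != Sstar) t ->
  fstep u1 u2 q t e = fs (count (pred1 S0) t) (count (pred1 S1) t) e.
Proof.
move=> /allP H; rewrite /fstep.
have -> : (last S0 t == Sstar) = false.
  have := mem_last S0 t; rewrite in_cons => /orP [/eqP ->|/H]; first by rewrite symE.
  by move/negbTE.
by rewrite andbF.
Qed.

Lemma pw_rcons n (t : n.-tuple sym) x :
  pw u1 u2 q (rcons_tuple t x) = pw u1 u2 q t * fstep u1 u2 q t x.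
Proof.
rewrite /pw big_ord_recr /=; congr (_ * _).
  apply: eq_bigr => i _.
  have Hi : (i < size t)%N by rewrite size_tuple.
  rewrite -cats1 takel_cat; last by rewrite ltnW.
  congr (fstep _ _ _ _ _).
  by rewrite !(tnth_nth S0) /= nth_rcons Hi.
rewrite -cats1 -{1}(size_tuple t) take_size_cat //.
by rewrite (tnth_nth S0) /= nth_rcons size_tuple ltnn eqxx.
Qed.

Definition Ssum n i0 i1 i2 :=
  \sum_(w : n.-tuple sym | Pn w i0 i1 i2) pw u1 u2 q w.

Lemma sum_sym (F : sym -> R) : \sum_x F x = F S0 + F S1 + F S2 + F Sstar.
Proof.
rewrite (bigD1 S0) // (bigD1 S1) ?symE // (bigD1 S2) ?symE // (bigD1 Sstar) ?symE //= big1.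
  by rewrite addr0 !addrA.
by case; rewrite !symE.
Qed.

Lemma term n x i0 i1 i2 j0 j1 j2 (c : R) :
  (forall t : seq sym, Pn (rcons t x) i0 i1 i2 = Pn t j0 j1 j2) ->
  (forall t : seq sym, Pn t j0 j1 j2 -> fstep u1 u2 q t x = c) ->
  \sum_(t : n.-tuple sym) (if Pn (rcons t x) i0 i1 i2 then pw u1 u2 q t * fstep u1 u2 q t x else 0)
  = Ssum n j0 j1 j2 * c.
Proof.
move=> H1 H2; rewrite /Ssum big_distrl /= [RHS]big_mkcond /=.
apply: eq_bigr => t _; rewrite H1; case: ifP => // /H2 -> //.
Qed.

Lemma term0 n x i0 i1 i2 :
  (forall t : seq sym, Pn (rcons t x) i0 i1 i2 = false) ->
  \sum_(t : n.-tuple sym) (if Pn (rcons t x) i0 i1 i2 then pw u1 u2 q t * fstep u1 u2 q t x else 0)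
  = 0.
Proof. by move=> H; rewrite big1 // => t _; rewrite H. Qed.

Lemma Ssum_rec n i0 i1 i2 :
  Ssum n.+1 i0 i1 i2 =
  (if i0 is k.+1 then Ssum n k i1 i2 * (1 - q ^+ k * (u1 + u2)) else 0) +
  (if i1 is k.+1 then Ssum n i0 k i2 * (q ^+ i0 * u1) else 0) +
  (if i2 is k.+1 then Ssum n i0 i1 k * (q ^+ (i0 + i1) * u2) else 0).
Proof.
rewrite /Ssum big_mkcond /=.
rewrite (reindex (fun p : n.-tuple sym * sym => rcons_tuple p.1 p.2)) /=; last first.
  apply: onW_bij; exists (@unr n).
    case=> t x; rewrite /unr; congr pair.
      by apply: val_inj => /=; rewrite take_rcons_t.
    by rewrite (tnth_nth S0) /= nth_rcons size_tuple ltnn eqxx.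
  move=> w; apply: val_inj => /=.
  rewrite (tnth_nth S0) /= -take_nth ?size_tuple //.
  by rewrite take_oversize ?size_tuple.
rewrite -(pair_big xpredT xpredT (fun (t : n.-tuple sym) x =>
   if Pn (rcons t x) i0 i1 i2 then pw u1 u2 q (rcons_tuple t x) else 0)) /=.
rewrite exchange_big sum_sym /=.
under eq_bigr => t _ do rewrite pw_rcons.
under [in X in _ + X + _ + _]eq_bigr => t _ do rewrite pw_rcons.
under [in X in _ + X + _]eq_bigr => t _ do rewrite pw_rcons.
under [in X in _ + X]eq_bigr => t _ do rewrite pw_rcons.
rewrite [in X in _ + X](@term0 n Sstar i0 i1 i2); last first.
  by move=> t; rewrite /Pn all_rcons eqxx.
rewrite addr0.
have cnt : forall (t : seq sym) (a b : sym), count (pred1 a) (rcons t b) = (count (pred1 a) t + seqb b a)%N.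
  by move=> t a b; rewrite count_rcons /= symE.
congr (_ + _ + _).
- case: i0 => [|k].
    by apply: term0 => t; rewrite /Pn all_rcons ?n0 ?n1 ?n2 !cnt /= addn1 andbF.
  apply: term => t.
    by rewrite /Pn all_rcons ?n0 ?n1 ?n2 !cnt /= addn1 addn0 eqSS !addn0.
  by case/andP=> Ha /and3P [/eqP <- _ _]; rewrite fstep_ns.
- case: i1 => [|k].
    by apply: term0 => t; rewrite /Pn all_rcons ?n0 ?n1 ?n2 !cnt /= addn1 !andbF.
  apply: term => t.
    by rewrite /Pn all_rcons ?n0 ?n1 ?n2 !cnt /= addn1 addn0 eqSS !addn0.
  by case/andP=> Ha /and3P [/eqP <- _ _]; rewrite fstep_ns.
- case: i2 => [|k].
    by apply: term0 => t; rewrite /Pn all_rcons ?n0 ?n1 ?n2 !cnt /= addn1 !andbF.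
  apply: term => t.
    by rewrite /Pn all_rcons ?n0 ?n1 ?n2 !cnt /= addn1 addn0 eqSS !addn0.
  by case/andP=> Ha /and3P [/eqP <- /eqP <- _]; rewrite fstep_ns.
Qed.


Lemma qpochS (x : R) k : qpoch x q k.+1 = qpoch x q k * (1 - q ^+ k * x).
Proof. by rewrite /qpoch big_ord_recr. Qed.

Lemma qpoch0 (x : R) : qpoch x q 0 = 1.
Proof. by rewrite /qpoch big_ord0. Qed.

Lemma main n : forall i0 i1 i2, (i0 + i1 + i2)%N = n ->
  Ssum n i0 i1 i2 * (qpoch q q i0 * qpoch q q i1 * qpoch q q i2) =
  u1 ^+ i1 * u2 ^+ i2 * qpoch (u1 + u2) q i0 * qpoch q q n.
Proof.
elim: n => [|n IH] i0 i1 i2 Hs.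
  have [-> -> ->] : [/\ i0 = 0%N, i1 = 0%N & i2 = 0%N] by split; lia.
  rewrite /Ssum (big_pred1 [tuple]); last by move=> w; rewrite tuple0 /= eqxx.
  by rewrite /pw big_ord0 !qpoch0 !expr0 !mulr1.
rewrite Ssum_rec !mulrDl.
have T0 : (if i0 is k.+1 then Ssum n k i1 i2 * (1 - q ^+ k * (u1 + u2)) else 0) *
   (qpoch q q i0 * qpoch q q i1 * qpoch q q i2) = (u1 ^+ i1 * u2 ^+ i2 * qpoch (u1 + u2) q i0 * qpoch q q n) * (1 - q ^+ i0).
  case Ei0: i0 => [|k]; first by rewrite mul0r expr0 subrr mulr0.
  have := IH k i1 i2 ltac:(lia) => E.
  rewrite !qpochS; transitivity ((Ssum n k i1 i2 * (qpoch q q k * qpoch q q i1 * qpoch q q i2)) *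
     ((1 - q ^+ k * (u1 + u2)) * (1 - q ^+ k * q))); first by ring.
  by rewrite E exprSr; ring.
have T1 : (if i1 is k.+1 then Ssum n i0 k i2 * (q ^+ i0 * u1) else 0) *
   (qpoch q q i0 * qpoch q q i1 * qpoch q q i2) = (u1 ^+ i1 * u2 ^+ i2 * qpoch (u1 + u2) q i0 * qpoch q q n) * (q ^+ i0 * (1 - q ^+ i1)).
  case Ei1: i1 => [|k]; first by rewrite mul0r expr0 subrr !mulr0.
  have := IH i0 k i2 ltac:(lia) => E.
  rewrite !qpochS; transitivity ((Ssum n i0 k i2 * (qpoch q q i0 * qpoch q q k * qpoch q q i2)) *
     ((q ^+ i0 * u1) * (1 - q ^+ k * q))); first by ring.
  by rewrite E !exprSr; ring.
have T2 : (if i2 is k.+1 then Ssum n i0 i1 k * (q ^+ (i0 + i1) * u2) else 0) *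
   (qpoch q q i0 * qpoch q q i1 * qpoch q q i2) = (u1 ^+ i1 * u2 ^+ i2 * qpoch (u1 + u2) q i0 * qpoch q q n) * (q ^+ (i0 + i1) * (1 - q ^+ i2)).
  case Ei2: i2 => [|k]; first by rewrite mul0r expr0 subrr !mulr0.
  have := IH i0 i1 k ltac:(lia) => E.
  rewrite !qpochS; transitivity ((Ssum n i0 i1 k * (qpoch q q i0 * qpoch q q i1 * qpoch q q k)) *
     ((q ^+ (i0 + i1) * u2) * (1 - q ^+ k * q))); first by ring.
  by rewrite E !exprSr; ring.
rewrite T0 T1 T2 qpochS -exprSr -Hs !exprD; ring.
Qed.

End Main.

Lemma nostar_count (s : seq sym) :
  all (fun e => e != Sstar) s = (count (pred1 Sstar) s == 0%N).
Proof. elim: s => //= x s ->; case: x; rewrite !symE //=. Qed.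

Lemma count_sym4 (s : seq sym) :
  (count (pred1 S0) s + count (pred1 S1) s + count (pred1 S2) s + count (pred1 Sstar) s)%N = size s.
Proof. elim: s => //= x s IH; rewrite -IH; case: x; rewrite !symE /= !add0n ?add1n ?addSn ?addnS //. Qed.

Lemma inA_Pn n (w : n.-tuple sym) i0 i1 i2 : (i0 + i1 + i2)%N = n ->
  inA i0 i1 i2 w = Pn w i0 i1 i2.
Proof.
move=> Hs; rewrite /inA /Pn.
case H: [&& count _ w == i0, _ & _]; rewrite ?andbT ?andbF //.
move/and3P: H => [/eqP h0 /eqP h1 /eqP h2].
have ns : all (fun e => e != Sstar) w.
  rewrite nostar_count; have := count_sym4 w; rewrite size_tuple h0 h1 h2 => E.
  have : (i0 + i1 + i2 + count (pred1 Sstar) w = i0 + i1 + i2 + 0)%N by rewrite addn0 E Hs.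
  by move/addnI ->.
rewrite ns; apply/forallP => k; apply/forallP => l; apply/implyP => /andP [H _].
by move/allP: ns => /(_ _ (mem_tnth k w)); rewrite H.
Qed.

Lemma qpoch_gt0 (R : realFieldType) (q : R) k : 0 < q -> q < 1 -> 0 < qpoch q q k.
Proof.
move=> q0 q1; apply: prodr_gt0 => i _.
by rewrite subr_gt0 -exprSr exprn_ilt1 // ltW.
Qed.

Theorem theorem3p1 (R : realFieldType) (u1 u2 q : R) (n i0 i1 i2 : nat) :
  0 < u1 -> 0 < u2 -> u1 + u2 < 1 -> 0 < q -> q < 1 -> (0 < n)%N ->
  (i0 + i1 + i2)%N = n ->
  \sum_(w : n.-tuple sym | inA i0 i1 i2 w) pw u1 u2 q w =
  u1 ^+ i1 * u2 ^+ i2 * qpoch (u1 + u2) q i0 * qmultinom q n i0 i1 i2.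
Proof.
move=> _ _ _ q0 q1 _ Hs.
rewrite (eq_bigl (fun w : n.-tuple sym => Pn w i0 i1 i2)); last by move=> w; exact: inA_Pn.
have M := main u1 u2 q Hs.
have D : qpoch q q i0 * qpoch q q i1 * qpoch q q i2 != 0.
  by rewrite gt_eqF // !mulr_gt0 // qpoch_gt0.
rewrite /qmultinom mulrA -M mulfK //.
Qed.
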